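(* Let $a,r>0$, $\beta\in\mathbb{R}$, $\theta\in(\theta_0,\frac\pi2)$ with $\tan\theta_0\ge\frac{|\beta|}{\sqrt2}$, and $\lambda\in\Sigma_{\theta,r}$. Then for all $\xi'\in\mathbb{R}^{N-1}$ and $j=1,2$, $${\rm Re}(L_j)\ge C(a,\beta,\theta,r)\big(|\lambda|^{1/2}+1+|\xi'|\big).$$
   Context: $\Sigma_{\theta,r}=\{z\in\mathbb{C}\setminus\{0\}:|\arg z|<\pi-\theta,|z|>r\}$. $z_{1,2}(\lambda)=\frac{2\lambda+a(1+\beta^2/2)\pm\sqrt{a^2(1+\beta^2/2)^2-2\lambda^2\beta^2}}{2(1+\beta^2/2)}$ and $L_j(\lambda,\xi')=\sqrt{|\xi'|^2+z_j(\lambda)}$, the square root with positive real part. *)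

(* Defs.v *)
From HB Require Import structures.
From mathcomp Require Import all_boot all_order all_algebra.
From mathcomp Require Import all_classical all_reals all_analysis.
From mathcomp Require Import complex.
Set Implicit Arguments. Unset Strict Implicit. Unset Printing Implicit Defensive.
Import Order.TTheory GRing.Theory Num.Theory.
Local Open Scope ring_scope.
Local Open Scope complex_scope.

Section Defs.
Variable R : realType.

Definition cmod (z : R[i]) : R :=
  Num.sqrt (complex.Re z ^+ 2 + complex.Im z ^+ 2).

(* principal argument Arg z in (-pi, pi] (Arg 0 := 0) *)
Definition carg (z : R[i]) : R :=
  let x := complex.Re z in let y := complex.Im z in
  if 0 < x then atan (y / x)
  else if x < 0 then (if 0 <= y then atan (y / x) + pi else atan (y / x) - pi)
  else if 0 < y then pi / 2 else if y < 0 then - (pi / 2) else 0.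

Definition Sigma (theta r : R) : set R[i] :=
  [set z | z != 0 /\ `|carg z| < pi - theta /\ r < cmod z].

(* the square root with nonnegative real part (principal square root):
   sqrt w = sqrt((|w|+Re w)/2) + i sgn(Im w) sqrt((|w|-Re w)/2), sgn 0 := 1 *)
Definition csqrt (w : R[i]) : R[i] :=
  let x := complex.Re w in let y := complex.Im w in
  (Num.sqrt ((cmod w + x) / 2)) +i*
  ((if 0 <= y then 1 else -1) * Num.sqrt ((cmod w - x) / 2)).

(* z_j(lambda), j = 1 (+ sign), j = 2 (- sign) *)
Definition zj (a beta : R) (j : bool) (lam : R[i]) : R[i] :=
  let b := (1 + beta ^+ 2 / 2)%:C in
  let d := csqrt ((a%:C) ^+ 2 * b ^+ 2 - 2%:R * lam ^+ 2 * (beta%:C) ^+ 2) in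
  (2%:R * lam + a%:C * b + (if j then d else - d)) / (2%:R * b).

Definition vnorm (n : nat) (xi : 'rV[R]_n) : R :=
  Num.sqrt (\sum_(i < n) xi 0 i ^+ 2).

Definition Lj (a beta : R) (j : bool) (lam : R[i]) (n : nat) (xi : 'rV[R]_n)
  : R[i] := csqrt ((vnorm xi ^+ 2)%:C + zj a beta j lam).

End Defs.

(* Main.v *)
Require Import Defs.
From HB Require Import structures.
From mathcomp Require Import all_boot all_order all_algebra.
From mathcomp Require Import all_classical all_reals all_analysis.
From mathcomp Require Import complex.
From mathcomp Require Import ring lra.
Import Order.TTheory GRing.Theory Num.Theory.
Local Open Scope ring_scope.
Local Open Scope classical_set_scope.
Local Open Scope complex_scope.

Section Aux.
Variable R : realType.
Implicit Types z w : R[i].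
Local Notation cRe := complex.Re.
Local Notation cIm := complex.Im.

Lemma cmod_normc z : `|z| = (cmod z)%:C.
Proof. by rewrite normc_def. Qed.

Lemma cmod_ge0 z : 0 <= cmod z.
Proof. exact: sqrtr_ge0. Qed.

Lemma cmod_sqr z : cmod z ^+ 2 = cRe z ^+ 2 + cIm z ^+ 2.
Proof. by rewrite /cmod sqr_sqrtr // addr_ge0 // sqr_ge0. Qed.

Lemma cmodM z w : cmod (z * w) = cmod z * cmod w.
Proof. by have := normrM z w; rewrite !cmod_normc -rmorphM => /complexI. Qed.

Lemma cmodD z w : cmod (z + w) <= cmod z + cmod w.
Proof. by have := ler_normD z w; rewrite !cmod_normc -rmorphD lecR. Qed.

Lemma cmodB z w : cmod z - cmod w <= cmod (z - w).
Proof. have := cmodD (z - w) w; rewrite subrK; lra. Qed.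

Lemma cmod_Re z : `|cRe z| <= cmod z.
Proof. rewrite /cmod -sqrtr_sqr; apply: ler_wsqrtr; rewrite lerDl sqr_ge0 //. Qed.

Lemma cmod_Im z : `|cIm z| <= cmod z.
Proof. rewrite /cmod -sqrtr_sqr; apply: ler_wsqrtr; rewrite lerDr sqr_ge0 //. Qed.

Lemma cmod_real (x : R) : cmod (x%:C) = `|x|.
Proof. by rewrite /cmod /= expr0n /= addr0 sqrtr_sqr. Qed.

Lemma ReD z w : cRe (z + w) = cRe z + cRe w. Proof. by case: z; case: w. Qed.
Lemma ImD z w : cIm (z + w) = cIm z + cIm w. Proof. by case: z; case: w. Qed.
Lemma ReB z w : cRe (z - w) = cRe z - cRe w. Proof. by case: z; case: w. Qed.
Lemma ImB z w : cIm (z - w) = cIm z - cIm w. Proof. by case: z; case: w. Qed.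
Lemma ReC (x : R) : cRe (x%:C) = x. Proof. by []. Qed.
Lemma ImC (x : R) : cIm (x%:C) = 0. Proof. by []. Qed.

Lemma csqrtE w : csqrt w = sqrtc w.
Proof.
case: w => x y; rewrite /csqrt /sqrtc /=.
congr (_ +i* _); congr (_ * _).
have [->|hy0] := eqVneq y 0; first by rewrite lexx.
case: ifP => hy.
  by apply/esym/eqP; rewrite sgr_cp0 lt_neqAle eq_sym hy0 hy.
by apply/esym/eqP; rewrite sgr_cp0 ltNge hy.
Qed.

Lemma csqrt_sqr w : csqrt w ^+ 2 = w.
Proof. by rewrite csqrtE sqr_sqrtc. Qed.


Lemma cmod_le z : cmod z <= `|cRe z| + `|cIm z|.
Proof.
rewrite /cmod -[X in _ <= X]ger0_norm ?addr_ge0 // -sqrtr_sqr.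
apply: ler_wsqrtr.
have h1 := real_normK (num_real (cRe z)).
have h2 := real_normK (num_real (cIm z)).
have := normr_ge0 (cRe z); have := normr_ge0 (cIm z). nra.
Qed.

Lemma carg_neg (theta : R) (lam : R[i]) : 0 < theta -> theta < pi / 2 ->
  cRe lam < 0 -> `|carg lam| < pi - theta ->
  tan theta * `|cRe lam| < `|cIm lam|.
Proof.
move=> th0 th1 hx; rewrite /carg /=.
have -> : (0 < cRe lam) = false by apply/negbTE; rewrite -leNgt ltW.
rewrite hx.

have hpi := pi_gt0 R.
have hin : theta \in `](- (pi / 2)), (pi / 2)[%R.
  rewrite in_itv /= th1 andbT; lra.
have hT := tanK hin.
set x := cRe lam; set y := cIm lam.
have hxy : y = (y / x) * x by rewrite divfK // lt_eqF.
have a1 := atan_gtNpi2 (y / x); have a2 := atan_ltpi2 (y / x).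
case: ifP => hy.
  rewrite ger0_norm; last by lra.
  move=> h; rewrite (ger0_norm hy) (ler0_norm (ltW hx)).
  rewrite ltNge; apply/negP => hle.
  have : atan (- tan theta) <= atan (y / x).
    apply: le_atan; nra.
  rewrite atanN hT; lra.
rewrite ler0_norm; last by lra.
move=> h; have hy' : y < 0 by rewrite ltNge hy.
rewrite (ltr0_norm hy') (ler0_norm (ltW hx)).
rewrite ltNge; apply/negP => hle.
have : atan (y / x) <= atan (tan theta).
  apply: le_atan; nra.
rewrite hT; lra.
Qed.

Lemma sector (theta T k : R) (lam : R[i]) : 0 < theta -> theta < pi / 2 ->
  T = tan theta -> 0 < T -> 0 < k -> 1 < k * T -> `|carg lam| < pi - theta ->
  Num.min (Num.min 1 k) ((k * T - 1) / (1 + T)) * cmod lam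
    <= cRe lam + k * `|cIm lam|.
Proof.
move=> th0 th1 hT T0 k0 kT hc.
set m := Num.min _ _.
have m1 : m <= 1 by rewrite /m !ge_min lexx.
have mk : m <= k by rewrite /m !ge_min lexx orbT.
have m3 : m * (1 + T) <= k * T - 1.
  rewrite -ler_pdivlMr; last by lra.
  by rewrite /m ge_min lexx orbT.
have m0 : 0 < m.
  by rewrite /m !lt_min ltr01 k0 /= divr_gt0 //; lra.
have hle := cmod_le lam.
have ax := normr_ge0 (cRe lam); have ay := normr_ge0 (cIm lam).
case: (ltgtP (cRe lam) 0) => hx.
- have := @carg_neg theta lam th0 th1 hx hc; rewrite -hT => hneg.
  rewrite (ler0_norm (ltW hx)) in hneg hle ax *.
  nra.
- rewrite (gtr0_norm hx) in hle ax. nra.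
- rewrite hx normr0 in hle *. nra.
Qed.

Lemma lip (lam u : R[i]) (k : R) : 0 <= k ->
  cRe lam + k * `|cIm lam| + cRe u - k * `|cIm u| <= (1 + k) * cmod (lam + u).
Proof.
move=> k0.
have h1 := cmod_Re (lam + u); have h2 := cmod_Im (lam + u).
rewrite ReD in h1; rewrite ImD in h2.
have h3 : cRe lam + cRe u <= `|cRe lam + cRe u| by apply: ler_norm.
have h4 : `|cIm lam| <= `|cIm lam + cIm u| + `|cIm u|.
  by have := ler_normD (cIm lam + cIm u) (- cIm u); rewrite addrK normrN.
nra.
Qed.

Lemma factor_lb (lam u : R[i]) (k m r c1 t : R) : 0 <= k -> 0 <= t -> 0 < r ->
  c1 * (r + 1) <= m * r -> 0 <= c1 ->
  m * cmod lam <= cRe lam + k * `|cIm lam| -> r < cmod lam ->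
  c1 * t <= cRe u - k * `|cIm u| ->
  c1 * (cmod lam + t + 1) <= (1 + k) * cmod (lam + u).
Proof.
move=> k0 t0 r0 hc1 c10 hF hr hu.
have := @lip lam u k k0.
have : c1 * (cmod lam + 1) <= m * cmod lam.
  have m0 : 0 <= m * r by apply: le_trans hc1; nra.
  nra.
nra.
Qed.

Lemma gfactor (lam u1 u2 : R[i]) (a s t : R) :
  u1 + u2 = (2 * t + a)%:C -> u1 * u2 = ((1 + s) * (t * (t + a)))%:C ->
  (lam + t%:C) * (lam + t%:C + a%:C) + (s * (t * (t + a)))%:C
   = (lam + u1) * (lam + u2).
Proof.
move=> hs hp.
have -> : (lam + u1) * (lam + u2) = lam ^+ 2 + (u1 + u2) * lam + u1 * u2 by ring.
rewrite hs hp !rmorphD !rmorphM /= !rmorphD /=.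

rewrite ?rmorph1.
ring.
Qed.

Lemma gbound (lam : R[i]) (a s k m r c1 t : R) : 0 < a -> 0 <= s -> 0 <= k ->
  0 <= t -> 0 < r -> c1 * (r + 1) <= m * r -> 0 <= c1 -> c1 <= 1 ->
  c1 <= 1 - k * Num.sqrt s ->
  m * cmod lam <= cRe lam + k * `|cIm lam| -> r < cmod lam ->
  (c1 * (cmod lam + t + 1)) ^+ 2 <=
  (1 + k) ^+ 2 * cmod ((lam + t%:C) * (lam + t%:C + a%:C) + (s * (t * (t + a)))%:C).
Proof.
move=> a0 s0 k0 t0 r0 hc1 c10 c11 c1s hF hr.
set tau := t + a / 2.
set D := (a / 2) ^+ 2 - s * (t * (t + a)).
have hX : 0 <= c1 * (cmod lam + t + 1).
  by apply: mulr_ge0 => //; have := cmod_ge0 lam; lra.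
have fin : forall u1 u2 : R[i],
  u1 + u2 = (2 * t + a)%:C -> u1 * u2 = ((1 + s) * (t * (t + a)))%:C ->
  c1 * t <= cRe u1 - k * `|cIm u1| -> c1 * t <= cRe u2 - k * `|cIm u2| ->
  (c1 * (cmod lam + t + 1)) ^+ 2 <=
  (1 + k) ^+ 2 * cmod ((lam + t%:C) * (lam + t%:C + a%:C) + (s * (t * (t + a)))%:C).
  move=> u1 u2 hs hp h1 h2.
  rewrite (gfactor lam _ _ a s t hs hp) cmodM.
  have f1 := factor_lb _ _ _ _ _ _ _ k0 t0 r0 hc1 c10 hF hr h1.
  have f2 := factor_lb _ _ _ _ _ _ _ k0 t0 r0 hc1 c10 hF hr h2.
  have g1 := cmod_ge0 (lam + u1); have g2 := cmod_ge0 (lam + u2).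
  nra.
have sb0 := sqrtr_ge0 s.
have sbs : Num.sqrt s ^+ 2 = s by rewrite sqr_sqrtr.
case: (lerP 0 D) => hD.
- set e := Num.sqrt D.
  have e0 : 0 <= e := sqrtr_ge0 D.
  have he : e ^+ 2 = D by rewrite sqr_sqrtr.
  have ea : e <= a / 2.
    have : e ^+ 2 <= (a / 2) ^+ 2.
      rewrite he /D; have : 0 <= s * (t * (t + a)).
        by apply: mulr_ge0 => //; apply: mulr_ge0 => //; lra.
      lra.
    nra.
  apply: (fin ((tau - e)%:C) ((tau + e)%:C)).
  + rewrite -rmorphD; congr (_%:C); rewrite /tau; lra.
  + rewrite -rmorphM; congr (_%:C).
    have -> : (tau - e) * (tau + e) = tau ^+ 2 - e ^+ 2 by ring.
    by rewrite he /D /tau; field.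
  + rewrite /= normr0 mulr0 subr0 /tau; nra.
  + rewrite /= normr0 mulr0 subr0 /tau; nra.
- set h := Num.sqrt (- D).
  have h0 : 0 <= h := sqrtr_ge0 (- D).
  have hh : h ^+ 2 = - D by rewrite sqr_sqrtr //; lra.
  have hs : h <= Num.sqrt s * tau.
    have : h ^+ 2 <= (Num.sqrt s * tau) ^+ 2.
      rewrite hh /D [(Num.sqrt s * tau) ^+ 2]exprMn sbs /tau.
      have : 0 <= s * (a / 2) ^+ 2 by apply: mulr_ge0 => //; apply: sqr_ge0.
      nra.
    have : 0 <= Num.sqrt s * tau by apply: mulr_ge0 => //; rewrite /tau; lra.
    nra.
  have ks : k * Num.sqrt s <= 1 by lra.
  apply: (fin (tau +i* h) (tau +i* (- h))).
  + apply/eqP; rewrite eq_complex /=; apply/andP; split; apply/eqP; rewrite /tau; lra.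
  + apply/eqP; rewrite eq_complex /=; apply/andP; split; apply/eqP.
      have -> : tau * tau - h * - h = tau ^+ 2 + h ^+ 2 by ring.
      by rewrite hh /D /tau; field.
    ring.
  + rewrite /= (ger0_norm h0) /tau; rewrite /tau in hs; nra.
  + rewrite /= normrN (ger0_norm h0) /tau; rewrite /tau in hs; nra.
Qed.

Lemma zj_prod (a beta t : R) (lam : R[i]) :
  (1 + beta ^+ 2 / 2)%:C * (zj a beta true lam + t%:C) * (zj a beta false lam + t%:C)
  = (lam + t%:C) * (lam + t%:C + a%:C) + (beta ^+ 2 / 2 * (t * (t + a)))%:C.
Proof.
rewrite /zj.
set Bc := (1 + beta ^+ 2 / 2)%:C.
set d := csqrt _.
have hd : d ^+ 2 = a%:C ^+ 2 * Bc ^+ 2 - 2%:R * lam ^+ 2 * beta%:C ^+ 2.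
  exact: csqrt_sqr.
have hB : Bc != 0.
  rewrite fmorph_eq0; apply/negP => /eqP h.
  have : 0 <= beta ^+ 2 / 2 by apply: divr_ge0 => //; apply: sqr_ge0.
  lra.
have h2 : (2 : R[i]) != 0 by rewrite pnatr_eq0.
have eB : Bc - 1 = (beta ^+ 2 / 2)%:C.
  by rewrite /Bc rmorphD rmorph1 addrC addKr.
have hb2 : beta%:C ^+ 2 = 2 * (Bc - 1).
  rewrite eB rmorphM fmorphV rmorphXn rmorph_nat.
  by field.
have hs : (beta ^+ 2 / 2 * (t * (t + a)))%:C = (Bc - 1) * (t%:C * (t%:C + a%:C)).
  by rewrite eB !rmorphM rmorphD.
rewrite hs.
clearbody d Bc.
set p := 2%:R * lam + a%:C * Bc.
have -> : Bc * ((p + d) / (2%:R * Bc) + t%:C) * ((p + - d) / (2%:R * Bc) + t%:C)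
   = ((p + 2 * Bc * t%:C) ^+ 2 - d ^+ 2) / (4 * Bc).
  by field; rewrite ?mulf_neq0 ?hB ?h2 ?pnatr_eq0.
rewrite hd hb2 /p.
by field.
Qed.

Lemma cmodX2 z : cmod (z ^+ 2) = cmod z ^+ 2.
Proof. by rewrite !expr2 cmodM. Qed.

Lemma cmod_nat n : cmod (n%:R : R[i]) = n%:R.
Proof. by rewrite -(rmorph_nat (real_complex R)) cmod_real ger0_norm. Qed.

Lemma cmodN z : cmod (- z) = cmod z.
Proof. by case: z => x y; rewrite /cmod /= !sqrrN. Qed.

Lemma cmodBr z w : cmod (z - w) <= cmod z + cmod w.
Proof. by have := cmodD z (- w); rewrite cmodN. Qed.

Lemma zj_ub (a beta : R) (j : bool) (lam : R[i]) : 0 < a ->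
  cmod (zj a beta j lam) <=
  (1 + `|beta| + a * (1 + beta ^+ 2 / 2)) * (cmod lam + 1).
Proof.
move=> a0.
set b := 1 + beta ^+ 2 / 2.
have b1 : 1 <= b by rewrite /b lerDl; apply: divr_ge0 => //; apply: sqr_ge0.
set Bc := b%:C.
have hB : Bc != 0 by rewrite fmorph_eq0; apply/negP => /eqP h; lra.
set d := csqrt (a%:C ^+ 2 * Bc ^+ 2 - 2%:R * lam ^+ 2 * beta%:C ^+ 2).
have hd : cmod d ^+ 2 <= (a * b + 2 * `|beta| * cmod lam) ^+ 2.
  rewrite -cmodX2 csqrt_sqr.
  apply: le_trans (cmodBr _ _) _.
  rewrite !cmodM /Bc !cmod_real cmod_nat (ger0_norm (ltW a0)) (ger0_norm (le_trans ler01 b1)).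
  have := normr_ge0 beta; have := cmod_ge0 lam.
  have := mulr_ge0 (mulr_ge0 (mulr_ge0 (ltW a0) (le_trans ler01 b1)) (normr_ge0 beta)) (cmod_ge0 lam).
  nra.
have d0 := cmod_ge0 d.
have hd' : cmod d <= a * b + 2 * `|beta| * cmod lam.
  have : 0 <= a * b + 2 * `|beta| * cmod lam.
    have := normr_ge0 beta; have := cmod_ge0 lam; nra.
  nra.
have ez : forall e : R[i], cmod e <= 2 * cmod lam + a * b + cmod d ->
  cmod (e / (2%:R * Bc)) <= (1 + `|beta| + a * b) * (cmod lam + 1).
  move=> e he.
  have -> : e / (2%:R * Bc) = e * (1 / (2 * b))%:C.
    rewrite /Bc mul1r fmorphV rmorphM rmorph_nat; field; first exact: hB.
  rewrite cmodM cmod_real ger0_norm; last first.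
    apply: divr_ge0 => //; lra.
  set q := 1 / (2 * b).
  have q2 : q * (2 * b) = 1 by rewrite /q; field; lra.
  have q0 : 0 <= q by rewrite /q; apply: divr_ge0 => //; lra.
  have e0 := cmod_ge0 e.
  have hq : q <= 1 / 2 by nra.
  have := normr_ge0 beta; have := cmod_ge0 lam.
  have : cmod e * q <= cmod e / 2 by nra.
  have : 0 <= a * b * cmod lam.
    by apply: mulr_ge0; [apply: mulr_ge0; lra | exact: cmod_ge0].
  nra.
rewrite /zj -/b -/Bc -/d; apply: ez.
have hp : cmod (2%:R * lam + a%:C * Bc) <= 2 * cmod lam + a * b.
  apply: le_trans (cmodD _ _) _; rewrite !cmodM cmod_nat /Bc !cmod_real.
  by rewrite (ger0_norm (ltW a0)) (ger0_norm (le_trans ler01 b1)).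
case: j.
- by apply: le_trans (cmodD _ _) _; apply: lerD.
- by apply: le_trans (cmodD _ _) _; rewrite cmodN; apply: lerD.
Qed.

Lemma good_z (z : R[i]) (M c L : R) : 0 < M -> 0 < c -> 0 < L ->
  cmod z <= M * L -> (forall t, 0 <= t -> c * L <= cmod (z + t%:C)) ->
  Num.min c (c * c / (2 * M)) * L <= cmod z + cRe z.
Proof.
move=> M0 c0 L0 hz ht.
have hmin1 : Num.min c (c * c / (2 * M)) <= c by rewrite ge_min lexx.
have hmin2 : Num.min c (c * c / (2 * M)) <= c * c / (2 * M) by rewrite ge_min lexx orbT.
have hm0 : 0 <= Num.min c (c * c / (2 * M)).
  by rewrite le_min (ltW c0) /=; apply: divr_ge0; nra.
have hsq := cmod_sqr z; have z0 := cmod_ge0 z.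
case: (lerP 0 (cRe z)) => hx.
- have := ht 0 (lexx _); rewrite rmorph0 addr0 => h0; nra.
- have := ht (- cRe z); rewrite oppr_ge0 (ltW hx) => /(_ isT) h1.
  have hy : cmod (z + (- cRe z)%:C) = `|cIm z|.
    by case: z {hz ht hsq z0 h1 hx} => x y; rewrite /cmod /= subrr expr0n /= add0r addr0 sqrtr_sqr.
  rewrite hy in h1.
  have hy2 := real_normK (num_real (cIm z)).
  set k2 := c * c / (2 * M).
  have hk2 : k2 * (2 * M) = c * c by rewrite /k2; field; lra.
  have k20 : 0 <= k2 by rewrite /k2; apply: divr_ge0; nra.
  have H1 : (c * L) ^+ 2 <= (cmod z - cRe z) * (cmod z + cRe z).
    have : 0 <= c * L by nra.
    have := normr_ge0 (cIm z). nra.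
  have H2 : k2 * L <= cmod z + cRe z.
    have hxx : 0 <= cmod z + cRe z.
      have := cmod_Re z; rewrite ler0_norm; [lra | exact: ltW].
    have H3 : (k2 * L) * (2 * M * L) <= (cmod z + cRe z) * (2 * M * L).
      have : (cmod z - cRe z) * (cmod z + cRe z) <= (2 * M * L) * (cmod z + cRe z).
        apply: ler_wpM2r => //; nra.
      have : (k2 * L) * (2 * M * L) = (c * L) ^+ 2.
        by rewrite expr2; transitivity (k2 * (2 * M) * (L * L)); [ring | rewrite hk2; ring].
      nra.
    have hpos : 0 < 2 * M * L by apply: mulr_gt0 => //; lra.
    by rewrite ler_pM2r in H3.
  apply: le_trans H2; apply: ler_wpM2r => //; lra.
Qed.

Lemma final_step (z : R[i]) (v kap M L rho : R) : 0 < kap -> 0 < M -> 0 <= v ->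
  0 <= rho -> L = rho + 1 ->
  kap * L <= cmod z + cRe z -> cmod z <= M * L ->
  Num.min 1 (1 / (6 * ((1 + M) / kap + 1))) * (Num.sqrt rho + 1 + v)
   <= cRe (csqrt ((v ^+ 2)%:C + z)).
Proof.
move=> k0 M0 v0 r0 hL h1 h2.
set K := (1 + M) / kap + 1.
have K1 : 1 <= K by rewrite /K lerDr; apply: divr_ge0; lra.
set C := Num.min 1 (1 / (6 * K)).
have C1 : C <= 1 by rewrite /C ge_min lexx.
have C6 : C * (6 * K) <= 1.
  have : C <= 1 / (6 * K) by rewrite /C ge_min lexx orbT.
  rewrite -ler_pdivlMr ?mul1r //; lra.
have C0 : 0 <= C by rewrite /C le_min ler01 /=; apply: divr_ge0; lra.
set w := (v ^+ 2)%:C + z.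
rewrite /csqrt /=.
set f := cmod w + cRe w.
have hRe : cRe w = v ^+ 2 + cRe z by rewrite /w ReD.
have hw1 : cmod z <= cmod w + v ^+ 2.
  have := cmodBr w ((v ^+ 2)%:C); rewrite /w addrC addKr cmod_real ger0_norm //.
  exact: sqr_ge0.
have hw2 : cRe w <= cmod w by apply: le_trans (ler_norm _) (cmod_Re w).
have hf1 : kap * L <= f by rewrite /f; lra.
have hxz : - cmod z <= cRe z by have := cmod_Re z; rewrite ler_norml => /andP[].
have hf2 : 2 * v ^+ 2 <= f + 2 * M * L by rewrite /f; lra.
have hK : L + v ^+ 2 <= K * f.
  set ik := 1 / kap.
  have hik : ik * kap = 1 by rewrite /ik; field; lra.
  have ik0 : 0 <= ik by rewrite /ik; apply: divr_ge0; lra.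
  have hKe : K = (1 + M) * ik + 1 by rewrite /K /ik; field; lra.
  have e1 : L <= ik * f.
    have : ik * (kap * L) <= ik * f by apply: ler_wpM2l.
    by rewrite mulrA hik mul1r.
  have L0 : 0 <= L by lra.
  rewrite hKe; nra.
have sr := sqr_sqrtr r0; have sr0 := sqrtr_ge0 rho.
have X0 : 0 <= C * (Num.sqrt rho + 1 + v) by apply: mulr_ge0 => //; lra.
have HX : (C * (Num.sqrt rho + 1 + v)) ^+ 2 <= (f / 2).
  have E1 : (Num.sqrt rho + 1 + v) ^+ 2 <= 3 * (L + v ^+ 2).
    rewrite hL -{2}sr; have := sqr_ge0 (Num.sqrt rho - 1); have := sqr_ge0 (Num.sqrt rho - v); have := sqr_ge0 (1 - v); nra.
  have E2 : C ^+ 2 * (3 * (L + v ^+ 2)) <= C ^+ 2 * (3 * (K * f)).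
    by apply: ler_wpM2l; [apply: sqr_ge0 | lra].
  have E3 : C ^+ 2 * (3 * (K * f)) <= f / 2.
    have f0 : 0 <= f.
      have : 0 <= kap * L by apply: mulr_ge0; lra.
      lra.
    have : C * (C * (6 * K)) <= C * 1 by apply: ler_wpM2l.
    nra.
  rewrite exprMn; apply: le_trans E3; apply: le_trans E2.
  by apply: ler_wpM2l => //; apply: sqr_ge0.
by rewrite -(ger0_norm X0) -sqrtr_sqr; apply: ler_wsqrtr.
Qed.

Lemma root_far (a beta k m r c1 : R) (lam : R[i]) (j : bool) : 0 < a -> 0 <= k ->
  0 < r -> c1 * (r + 1) <= m * r -> 0 < c1 -> c1 <= 1 ->
  c1 <= 1 - k * Num.sqrt (beta ^+ 2 / 2) ->
  m * cmod lam <= cRe lam + k * `|cIm lam| -> r < cmod lam ->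
  forall t : R, 0 <= t ->
  c1 ^+ 2 / ((1 + k) ^+ 2 * (1 + beta ^+ 2 / 2) * (1 + `|beta| + a * (1 + beta ^+ 2 / 2)))
    * (cmod lam + 1) <= cmod (zj a beta j lam + t%:C).
Proof.
move=> a0 k0 r0 hc1 c10 c11 c1s hF hr t t0.
set b := 1 + beta ^+ 2 / 2.
have b1 : 1 <= b by rewrite /b lerDl; apply: divr_ge0 => //; apply: sqr_ge0.
set M := 1 + `|beta| + a * b.
have M1 : 1 <= M.
  rewrite /M; have := normr_ge0 beta; have : 0 <= a * b by apply: mulr_ge0; lra.
  lra.
have s0 : 0 <= beta ^+ 2 / 2 by apply: divr_ge0 => //; apply: sqr_ge0.
have G := gbound lam a (beta ^+ 2 / 2) k m r c1 t a0 s0 k0 t0 r0 hc1 (ltW c10) c11 c1s hF hr.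
have hP : forall j', b * (cmod (zj a beta j' lam + t%:C) * cmod (zj a beta (~~ j') lam + t%:C))
   = cmod ((lam + t%:C) * (lam + t%:C + a%:C) + (beta ^+ 2 / 2 * (t * (t + a)))%:C).
  move=> j'; rewrite -zj_prod !cmodM cmod_real (ger0_norm (le_trans ler01 b1)).
  by case: j' => /=; ring.
have hz' : cmod (zj a beta (~~ j) lam + t%:C) <= M * (cmod lam + t + 1).
  apply: le_trans (cmodD _ _) _; rewrite cmod_real (ger0_norm t0).
  have := zj_ub a beta (~~ j) lam a0; rewrite -/b -/M.
  have := cmod_ge0 lam. nra.
have A0 := cmod_ge0 (zj a beta j lam + t%:C).
set A := cmod (zj a beta j lam + t%:C) in A0 hz' hP *.
set B := cmod (zj a beta (~~ j) lam + t%:C) in hz' hP.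
have hY : 0 < cmod lam + t + 1 by have := cmod_ge0 lam; lra.
set Y := cmod lam + t + 1 in hY G hz'.
have H1 : c1 ^+ 2 * Y ^+ 2 <= (1 + k) ^+ 2 * b * A * (M * Y).
  rewrite -exprMn; apply: (le_trans G); rewrite -(hP j) -/A -/B.
  have : 0 <= (1 + k) ^+ 2 * b * A by apply: mulr_ge0 => //; apply: mulr_ge0; [apply: sqr_ge0 | lra].
  nra.
have H2 : c1 ^+ 2 * Y <= (1 + k) ^+ 2 * b * M * A.
  have : (c1 ^+ 2 * Y) * Y <= ((1 + k) ^+ 2 * b * M * A) * Y.
    by move: H1; rewrite !expr2; nra.
  by rewrite ler_pM2r.
have Q0 : 0 < (1 + k) ^+ 2 * b * M.
  apply: mulr_gt0; [apply: mulr_gt0|]; [apply: exprn_gt0|..]; lra.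
rewrite mulrAC ler_pdivrMr //.
have H3 : c1 ^+ 2 * (cmod lam + 1) <= c1 ^+ 2 * Y.
  rewrite /Y; apply: ler_wpM2l; [apply: sqr_ge0 | lra].
move: H2 H3; clear; move=> H2 H3.
nra.
Qed.
End Aux.

Local Close Scope complex_scope.

Theorem lemma3p13 (R : realType) (N : nat) (a beta theta0 theta r : R) :
  0 < a -> 0 < r ->
  0 <= theta0 -> theta0 < pi / 2 ->
  `|beta| / Num.sqrt 2 <= tan theta0 ->
  theta0 < theta -> theta < pi / 2 ->
  exists C : R, 0 < C /\
    forall (lam : R[i]), Sigma theta r lam ->
    forall (xi : 'rV[R]_(N.-1)) (j : bool),
      C * (Num.sqrt (cmod lam) + 1 + vnorm xi) <= complex.Re (Lj a beta j lam xi).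
Proof.
move=> a0 r0 t00 t01 hb t0t t1.
have hpi := pi_gt0 R.
pose s := beta ^+ 2 / 2.
have s0 : 0 <= s by apply: divr_ge0 => //; apply: sqr_ge0.
pose sb := Num.sqrt s.
have sb0 : 0 <= sb := sqrtr_ge0 s.
have hsb : sb <= tan theta0.
  apply: le_trans hb.
  have h2 : 0 < Num.sqrt 2 :> R by rewrite sqrtr_gt0.
  rewrite ler_pdivlMr //.
  have -> : `|beta| = Num.sqrt (s * 2).
    by rewrite /s mulfVK ?pnatr_eq0 // sqrtr_sqr.
  by rewrite sqrtrM.
pose T := tan theta.
have hT : tan theta0 < T.
  rewrite /T ltr_tan //; rewrite in_itv /=; apply/andP; split; lra.
have T0 : 0 < T by lra.
pose k := 2 / (T + sb).
have k0 : 0 < k by rewrite /k divr_gt0 //; lra.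
have kT : 1 < k * T.
  rewrite /k mulrAC ltr_pdivlMr; lra.
have ksb : k * sb < 1.
  rewrite /k mulrAC ltr_pdivrMr; lra.
pose m := Num.min (Num.min 1 k) ((k * T - 1) / (1 + T)).
have m0 : 0 < m.
  by rewrite /m !lt_min ltr01 k0 /= divr_gt0 //; lra.
pose c1 := Num.min (Num.min (m * r / (r + 1)) 1) (1 - k * sb).
have c10 : 0 < c1.
  rewrite /c1 !lt_min ltr01 andbT; apply/andP; split; last by lra.
  by apply: divr_gt0; [apply: mulr_gt0|lra].
have c11 : c1 <= 1 by rewrite /c1 !ge_min lexx orbT.
have c1s : c1 <= 1 - k * sb by rewrite /c1 ge_min lexx orbT.
have hc1 : c1 * (r + 1) <= m * r.
  have : c1 <= m * r / (r + 1) by rewrite /c1 !ge_min lexx.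
  by rewrite ler_pdivlMr //; lra.
pose b := 1 + beta ^+ 2 / 2.
have b1 : 1 <= b by rewrite /b lerDl.
pose M := 1 + `|beta| + a * b.
have M1 : 1 <= M.
  rewrite /M; have := normr_ge0 beta; have : 0 <= a * b by apply: mulr_ge0; lra.
  lra.
pose c := c1 ^+ 2 / ((1 + k) ^+ 2 * b * M).
have cpos : 0 < c.
  rewrite /c divr_gt0 ?exprn_gt0 //; apply: mulr_gt0; [apply: mulr_gt0|]; [apply: exprn_gt0|..]; lra.
pose kap := Num.min c (c * c / (2 * M)).
have kap0 : 0 < kap.
  rewrite /kap lt_min cpos /=; apply: divr_gt0; [apply: mulr_gt0|]; lra.
exists (Num.min 1 (1 / (6 * ((1 + M) / kap + 1)))).
split.
  rewrite lt_min ltr01 /=; apply: divr_gt0 => //; apply: mulr_gt0 => //.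
  have : 0 <= (1 + M) / kap by apply: divr_ge0; lra.
  lra.
move=> lam [lam0 [hc hr]] xi j.
have th0 : 0 < theta by lra.
have hF := @sector R theta T k lam th0 t1 (erefl T) T0 k0 kT hc.
have M0 : 0 < M by lra.
have L0 : 0 < cmod lam + 1 by have := cmod_ge0 _ lam; lra.
have hfar := @root_far R a beta k m r c1 lam j a0 (ltW k0) r0 hc1 c10 c11 c1s hF hr.
have hub := @zj_ub R a beta j lam a0.
have hg := @good_z R (zj a beta j lam) M c (cmod lam + 1) M0 cpos L0 hub hfar.
rewrite /Lj.
exact: (@final_step R (zj a beta j lam) (vnorm xi) kap M (cmod lam + 1) (cmod lam)
  kap0 M0 (sqrtr_ge0 _) (cmod_ge0 _ lam) erefl hg hub).
Qed.
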